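(* Let $G$ be a disconnected skew graph with table $T$. Then the non-empty boxes of $T$ form one of the following four patterns: (1) pattern $\boxplus$: there are exactly four non-empty boxes, located at $(i_1,j_1),(i_1,j_2),(i_2,j_1),(i_2,j_2)$ for some $i_1\ne i_2$ and $j_1\ne j_2$; (2) pattern $\mathcal{R}$: all non-empty boxes lie in a single row; (3) pattern $\mathcal{C}$: all non-empty boxes lie in a single column; (4) pattern $\mathcal{R}\cup\mathcal{C}$: all non-empty boxes lie in the union of one row $R$ and one column $C$, where $V(R)\not\subseteq V(C)$ and $V(C)\not\subseteq V(R)$.
   Context: A skew graph is defined from a table $T$ with $m$ rows and $n$ columns whose box $(i,j)$ contains a non-negative integer $t_{ij}$: place $t_{ij}$ distinct vertices in box $(i,j)$, and join two vertices by an edge if and only if their boxes lie in different rows and in different columns (vertices in the same row, same column, or same box are non-adjacent). Equivalently, skew graphs are exactly the complements of line graphs of bipartite multigraphs. A box is non-empty if it contains at least one vertex. For a row $R$ (resp. column $C$) of $T$, $V(R)$ (resp. $V(C)$) is the set of vertices located in boxes of that row (resp. column). *)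

(* Defs.v *)
From mathcomp Require Import all_boot.
Unset Printing Implicit Defensive.

(* A table T with m rows and n columns: box (i,j) contains t i j vertices. *)
Definition skew_vertex {m n : nat} (t : 'I_m -> 'I_n -> nat) : finType :=
  {p : 'I_m * 'I_n & 'I_(t p.1 p.2)}.

Definition vrow {m n} {t : 'I_m -> 'I_n -> nat} (v : skew_vertex t) : 'I_m := (tag v).1.
Definition vcol {m n} {t : 'I_m -> 'I_n -> nat} (v : skew_vertex t) : 'I_n := (tag v).2.

Definition skew_adj {m n} (t : 'I_m -> 'I_n -> nat) : rel (skew_vertex t) :=
  fun u v => (vrow u != vrow v) && (vcol u != vcol v).

Definition skew_disconnected {m n} (t : 'I_m -> 'I_n -> nat) : Prop :=
  exists u v : skew_vertex t, ~~ connect (skew_adj t) u v.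

Definition VR {m n} (t : 'I_m -> 'I_n -> nat) (r : 'I_m) : {set skew_vertex t} :=
  [set v | vrow v == r].
Definition VC {m n} (t : 'I_m -> 'I_n -> nat) (c : 'I_n) : {set skew_vertex t} :=
  [set v | vcol v == c].

Definition nonempty_box {m n} (t : 'I_m -> 'I_n -> nat) i j : bool := 0 < t i j.

Definition pattern_square {m n} (t : 'I_m -> 'I_n -> nat) : Prop :=
  exists i1 i2 j1 j2, i1 != i2 /\ j1 != j2 /\
    forall i j, nonempty_box t i j <-> ((i == i1) || (i == i2)) && ((j == j1) || (j == j2)).

Definition pattern_R {m n} (t : 'I_m -> 'I_n -> nat) : Prop :=
  exists r, forall i j, nonempty_box t i j -> i = r.

Definition pattern_C {m n} (t : 'I_m -> 'I_n -> nat) : Prop :=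
  exists c, forall i j, nonempty_box t i j -> j = c.

Definition pattern_RC {m n} (t : 'I_m -> 'I_n -> nat) : Prop :=
  exists r c, (forall i j, nonempty_box t i j -> i = r \/ j = c) /\
    ~~ (VR t r \subset VC t c) /\ ~~ (VC t c \subset VR t r).

(* Main.v *)
Require Import Defs.
From mathcomp Require Import all_boot.

Lemma homo_conn (T1 T2: finType) (e1: rel T1) (e2 : rel T2) (g : T1 -> T2) :
  (forall x y, e1 x y -> e2 (g x) (g y)) ->
  forall x y, connect e1 x y -> connect e2 (g x) (g y).
Proof.
move=> H x y /connectP [p Hp ->].
elim: p x Hp => [|z p IH] x /=; first by rewrite connect0.
case/andP=> Hxz Hp; exact: connect_trans (connect1 (H _ _ Hxz)) (IH _ Hp).
Qed.

Section S.
Variables (m n : nat) (t : 'I_m -> 'I_n -> nat).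

Definition mkv {i j} (h : 0 < t i j) : skew_vertex t :=
  @existT _ (fun p : 'I_m * 'I_n => 'I_(t p.1 p.2)) (i, j) (Ordinal h).

Lemma mkv_row i j h : vrow (@mkv i j h) = i. Proof. by []. Qed.
Lemma mkv_col i j h : vcol (@mkv i j h) = j. Proof. by []. Qed.

Lemma vpos (x : skew_vertex t) : 0 < t (vrow x) (vcol x).
Proof. by case: x => [[i j] k]; exact: (leq_ltn_trans (leq0n k) (ltn_ord k)). Qed.

Lemma VRn r c : (exists j, (j != c) && (0 < t r j)) -> ~~ (VR t r \subset VC t c).
Proof.
case=> j /andP[Hj Hp]; apply/subsetPn; exists (mkv Hp); by rewrite !inE ?mkv_row ?mkv_col.
Qed.

Lemma VRn' r c : ~~ (VR t r \subset VC t c) -> (exists j, (j != c) && (0 < t r j)).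
Proof.
move/subsetPn => [x]; rewrite !inE => /eqP <- Hx; exists (vcol x); by rewrite Hx vpos.
Qed.

Lemma VCn r c : (exists i, (i != r) && (0 < t i c)) -> ~~ (VC t c \subset VR t r).
Proof.
case=> i /andP[Hj Hp]; apply/subsetPn; exists (mkv Hp); by rewrite !inE ?mkv_row ?mkv_col.
Qed.

Lemma VCn' r c : ~~ (VC t c \subset VR t r) -> (exists i, (i != r) && (0 < t i c)).
Proof.
move/subsetPn => [x]; rewrite !inE => /eqP <- Hx; exists (vrow x); by rewrite Hx vpos.
Qed.

Lemma adjE x y : skew_adj t x y = (vrow x != vrow y) && (vcol x != vcol y).
Proof. by []. Qed.

Lemma core (u v : skew_vertex t) : vrow u = vrow v -> ~~ connect (skew_adj t) u v ->
  pattern_square t \/ pattern_R t \/ pattern_C t \/ pattern_RC t.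
Proof.
move=> Ea Hnc.
set a := vrow u; set b := vcol u; set d := vcol v.
have H1 : forall i j, 0 < t i j -> i != a -> j = b \/ j = d.
  move=> i j Hp Hi; case: (eqVneq j b) => [->|Hb]; first by left.
  case: (eqVneq j d) => [->|Hd]; first by right.
  case/negP: Hnc; apply: (connect_trans (y := mkv Hp)); apply: connect1;
    rewrite adjE mkv_row mkv_col.
    by rewrite eq_sym Hi eq_sym Hb.
  by rewrite -Ea Hi Hd.
case: (eqVneq b d) => [Ebd|Nbd].
  case: (boolP [exists i, (i != a) && (0 < t i b)]) => [/existsP [i0 /andP [Hi0 Hp0]]|Hn].
    case: (boolP [exists j, (j != b) && (0 < t a j)]) => [/existsP [j0 Hj0]|Hn2].
      right; right; right; exists a, b; split; last split.
      - move=> i j Hp; case: (eqVneq i a) => [->|Hi]; first by left.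
        by right; case: (H1 _ _ Hp Hi) => // ->.
      - by apply: VRn; exists j0.
      - by apply: VCn; exists i0; rewrite Hi0.
    right; right; left; exists b => i j Hp; case: (eqVneq i a) => [Ei|Hi].
      apply/eqP; apply: contraNT Hn2 => Hj; apply/existsP; exists j; by rewrite Hj -Ei.
    by case: (H1 _ _ Hp Hi) => ->; rewrite ?Ebd.
  right; left; exists a => i j Hp; apply/eqP; apply: contraNT Hn => Hi.
  apply/existsP; exists i; rewrite Hi /=.
  by case: (H1 _ _ Hp Hi) => Ej; move: Hp; rewrite Ej ?Ebd.
have H2 : forall i i', i != a -> i' != a -> 0 < t i b -> 0 < t i' d -> i = i'.
  move=> i i' Hi Hi' Hp Hp'; apply/eqP; apply: contraNT Hnc => Nii.
  apply: (connect_trans (y := mkv Hp')); first apply: connect1.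
    by rewrite adjE mkv_row mkv_col eq_sym Hi' Nbd.
  apply: (connect_trans (y := mkv Hp)); apply: connect1;
    rewrite adjE !mkv_row !mkv_col.
    by rewrite eq_sym Nii eq_sym Nbd.
  by rewrite -Ea Hi Nbd.
case: (boolP [exists i, (i != a) && (0 < t i b)]) => [/existsP [i1 /andP [Hi1 Hp1]]|Hn1];
case: (boolP [exists i, (i != a) && (0 < t i d)]) => [/existsP [i2 /andP [Hi2 Hp2]]|Hn2].
- left; have E12 := H2 _ _ Hi1 Hi2 Hp1 Hp2; subst i2.
  exists a, i1, b, d; split; first by rewrite eq_sym.
  split; first by [].
  move=> i j; split.
  + move=> Hp; case: (eqVneq i a) => [Ei|Hi].
      subst i; rewrite /=.
      case: (eqVneq j b) => //= Hjb; case: (eqVneq j d) => //= Hjd.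
      case/negP: Hnc.
      apply: (connect_trans (y := mkv Hp2)); first apply: connect1.
        by rewrite adjE mkv_row mkv_col eq_sym Hi1 Nbd.
      apply: (connect_trans (y := mkv Hp)); first apply: connect1.
        by rewrite adjE !mkv_row !mkv_col Hi1 eq_sym Hjd.
      apply: (connect_trans (y := mkv Hp1)); apply: connect1;
        rewrite adjE !mkv_row !mkv_col.
        by rewrite eq_sym Hi1 Hjb.
      by rewrite -Ea Hi1 Nbd.
    case: (H1 _ _ Hp Hi) => Ej; subst j; rewrite /= eqxx ?orbT andbT.
      exact/eqP/(H2 _ _ Hi Hi1 Hp Hp2).
    exact/eqP/esym/(H2 _ _ Hi1 Hi Hp1 Hp).
  + case/andP => /orP [] /eqP Ei /orP [] /eqP Ej; subst i j; rewrite /nonempty_box; try exact: vpos; try exact: Hp1; try exact: Hp2. rewrite /a Ea; exact: vpos.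
- right; right; right; exists a, b; split; last split.
  + move=> i j Hp; case: (eqVneq i a) => [->|Hi]; first by left.
    right; case: (H1 _ _ Hp Hi) => // Ej; subst j.
    by case/existsP: Hn2; exists i; rewrite Hi; exact: Hp.
  + apply: VRn; exists d; rewrite eq_sym Nbd /=; rewrite /a Ea; exact: vpos.
  + by apply: VCn; exists i1; rewrite Hi1.
- right; right; right; exists a, d; split; last split.
  + move=> i j Hp; case: (eqVneq i a) => [->|Hi]; first by left.
    right; case: (H1 _ _ Hp Hi) => // Ej; subst j.
    by case/existsP: Hn1; exists i; rewrite Hi; exact: Hp.
  + apply: VRn; exists b; rewrite Nbd /=; exact: vpos.
  + by apply: VCn; exists i2; rewrite Hi2.
- right; left; exists a => i j Hp; apply/eqP; apply: contraNT Hn1 => Hi.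
  case: (H1 _ _ Hp Hi) => Ej; subst j.
    by apply/existsP; exists i; rewrite Hi.
  by case/existsP: Hn2; exists i; rewrite Hi.
Qed.

End S.

Theorem theorem4 (m n : nat) (t : 'I_m -> 'I_n -> nat) :
  skew_disconnected t ->
  pattern_square t \/ pattern_R t \/ pattern_C t \/ pattern_RC t.
Proof.
case=> u [v Hnc].
case: (eqVneq (vrow u) (vrow v)) => [Er|Nr]; first exact: (core _ _ _ _ _ Er Hnc).
case: (eqVneq (vcol u) (vcol v)) => [Ec|Nc]; last first.
  by case/negP: Hnc; apply: connect1; rewrite adjE Nr Nc.
pose tT := fun (j : 'I_n) (i : 'I_m) => t i j.
pose f := fun x : skew_vertex t =>
  @existT _ (fun p : 'I_n * 'I_m => 'I_(tT p.1 p.2)) ((tag x).2, (tag x).1) (tagged x).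
pose g := fun x : skew_vertex tT =>
  @existT _ (fun p : 'I_m * 'I_n => 'I_(t p.1 p.2)) ((tag x).2, (tag x).1) (tagged x).
have gf : forall x, g (f x) = x by case=> [[i j] k].
have Hnc' : ~~ connect (skew_adj tT) (f u) (f v).
  apply: contra Hnc => /(@homo_conn _ _ _ (skew_adj t) g) H.
  rewrite -(gf u) -(gf v); apply: H => x y.
  by rewrite !adjE /vrow /vcol /= andbC.
case: (@core _ _ tT (f u) (f v) Ec Hnc') =>
  [[j1 [j2 [i1 [i2 [N1 [N2 H]]]]]]|[[r H]|[[c H]|[r [c [H [V1 V2]]]]]]].
- left; exists i1, i2, j1, j2; do 2 (split; first by []).
  by move=> i j; rewrite andbC; exact: (H j i).
- by right; right; left; exists r => i j Hp; exact: (H j i Hp).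
- by right; left; exists c => i j Hp; exact: (H j i Hp).
- right; right; right; exists c, r; split; last split.
  + by move=> i j Hp; case: (H j i Hp); [right|left].
  + by apply: VRn; case: (VCn' _ _ _ _ _ V2) => j Hj; exists j.
  + by apply: VCn; case: (VRn' _ _ _ _ _ V1) => i Hi; exists i.
Qed.
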